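(* Under the standing setting below, assume moreover the regularity condition: there exists $c_r>0$ with $\|\nabla_y g(x,y)\|\le c_r\|\nabla h(x,y)\|$ for all $(x,y)$. Take $\rho(x,y)=\|\nabla h(x,y)\|^2$ and $C_0>0$; for an integer $K\ge1$ set $\alpha=K^{-1/3}$, $\gamma=\min\{\alpha,\frac{1}{L_f+\alpha L_h}\}$, let $(x_0,y_0)$ satisfy $h(x_0,y_0)\le\alpha^2C_0$, and run the Algorithm. Then for every $\epsilon>0$ there is $K=\mathcal{O}(\epsilon^{-3/2})$ such that some $t\in\{0,\dots,K-1\}$ satisfies $$\max\{\|\nabla_y g(x_t,y_t)\|^2,\ \|\nabla f_t+\lambda_t\nabla h_t\|^2\}\le\epsilon,$$ i.e. $(x_t,y_t,\lambda_t)$ is an $\epsilon$-KKT point of $\min_{(x,y)} f(x,y)$ s.t. $h(x,y)=0$.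
   Context: Standing setting. $f,g:\mathbb{R}^n\times\mathbb{R}^m\to\mathbb{R}$. $f$ is continuously differentiable, $\bar f:=\inf f>-\infty$, $\nabla f$ is $L_f$-Lipschitz, and $\|\nabla f\|\le C_f$ everywhere. $g$ is twice continuously differentiable, and $h(x,y):=\|\nabla_y g(x,y)\|^2$ is continuously differentiable with $\nabla h$ being $L_h$-Lipschitz ($L_h>0$). Write $\nabla h=(\nabla_x h,\nabla_y h)$, $f_k=f(x_k,y_k)$, $h_k=h(x_k,y_k)$, $\nabla f_k=\nabla f(x_k,y_k)$, $\nabla h_k=\nabla h(x_k,y_k)$, etc. Given $\rho\ge0$, $\alpha,\gamma>0$, $(x_0,y_0)$, the Algorithm iterates for $k\ge0$: $\lambda_k=\big[-\nabla_x h_k^\top\nabla_x f_k-\nabla_y h_k^\top\nabla_y f_k+\alpha\rho(x_k,y_k)\big]_+/(\|\nabla_x h_k\|^2+\|\nabla_y h_k\|^2)$ if $\nabla h_k\ne0$, $\lambda_k=0$ otherwise; $\Delta_k^x=-\nabla_x f_k-\lambda_k\nabla_x h_k$, $\Delta_k^y=-\nabla_y f_k-\lambda_k\nabla_y h_k$; $x_{k+1}=x_k+\gamma\Delta_k^x$, $y_{k+1}=y_k+\gamma\Delta_k^y$. A triple $(x,y,\lambda)\in\mathbb{R}^n\times\mathbb{R}^m\times\mathbb{R}$ is an $\epsilon$-KKT point of $\min f$ s.t. $h=0$ if $h(x,y)\le\epsilon$ and $\|\nabla f(x,y)+\lambda\nabla h(x,y)\|^2\le\epsilon$. *)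

(* Defs.v *)
From HB Require Import structures.
From mathcomp Require Import all_boot all_order all_algebra.
From mathcomp Require Import all_classical all_reals all_analysis.
Set Implicit Arguments. Unset Strict Implicit. Unset Printing Implicit Defensive.
Import Order.TTheory GRing.Theory Num.Theory.
Import numFieldNormedType.Exports.
Local Open Scope ring_scope.

Section Defs.
Variable R : realType.
Variables n m : nat.

Definition E := ('rV[R]_n * 'rV[R]_m)%type.

Definition dotr k (u v : 'rV[R]_k) : R := \sum_(i < k) u 0 i * v 0 i.
Definition nsqr k (u : 'rV[R]_k) : R := dotr u u.

Definition dotE (p q : E) : R := dotr p.1 q.1 + dotr p.2 q.2.
Definition nsq (p : E) : R := dotE p p.
Definition nrm (p : E) : R := Num.sqrt (nsq p).

Definition is_gradient (F : E -> R) (G : E -> E) : Prop :=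
  forall p, differentiable F p /\ forall u, 'd F p u = dotE (G p) u.

(* Continuous differentiability of a vector field G : E -> E
   (differentiable everywhere, derivative continuous in the point;
   in finite dimension continuity of p |-> 'd G p u for each u is
   equivalent to continuity of p |-> 'd G p in operator norm). *)
Definition C1_field (G : E -> E) : Prop :=
  (forall p, differentiable G p) /\ (forall u, continuous (fun p => 'd G p u)).

Definition lipschitz_field (G : E -> E) (L : R) : Prop :=
  forall p q, nrm (G p - G q) <= L * nrm (p - q).

Definition alg_lambda (Gf Gh : E -> E) (rho : E -> R) (alpha : R) (p : E) : R :=
  if Gh p == 0 then 0
  else Num.max 0 (- dotr (Gh p).1 (Gf p).1 - dotr (Gh p).2 (Gf p).2
                  + alpha * rho p)
       / (nsqr (Gh p).1 + nsqr (Gh p).2).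

Definition alg_step (Gf Gh : E -> E) (rho : E -> R) (alpha gamma : R) (p : E) : E :=
  let lam := alg_lambda Gf Gh rho alpha p in
  (p.1 + gamma *: (- (Gf p).1 - lam *: (Gh p).1),
   p.2 + gamma *: (- (Gf p).2 - lam *: (Gh p).2)).

Definition alg_iter (Gf Gh : E -> E) (rho : E -> R) (alpha gamma : R)
  (p0 : E) (k : nat) : E := iter k (alg_step Gf Gh rho alpha gamma) p0.

End Defs.

(* Main.v *)
Require Import Defs.
From HB Require Import structures.
From mathcomp Require Import all_boot all_order all_algebra.
From mathcomp Require Import all_classical all_reals all_analysis.
From mathcomp Require Import ring lra.
Import Order.TTheory GRing.Theory Num.Theory.
Import numFieldNormedType.Exports.
Local Open Scope ring_scope.

Section Alg.
Context {R : realType} {n m : nat}.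

Lemma dotrC k (u v : 'rV[R]_k) : dotr u v = dotr v u.
Proof. by apply: eq_bigr => i _; rewrite mulrC. Qed.
Lemma dotrDl k (u v w : 'rV[R]_k) : dotr (u + v) w = dotr u w + dotr v w.
Proof. by rewrite /dotr -big_split; apply: eq_bigr => i _; rewrite mxE mulrDl. Qed.
Lemma dotrZl k a (u w : 'rV[R]_k) : dotr (a *: u) w = a * dotr u w.
Proof. by rewrite /dotr mulr_sumr; apply: eq_bigr => i _; rewrite mxE mulrA. Qed.
Lemma dotrNl k (u w : 'rV[R]_k) : dotr (- u) w = - dotr u w.
Proof. by rewrite -scaleN1r dotrZl mulN1r. Qed.
Lemma dotr_ge0 k (u : 'rV[R]_k) : 0 <= dotr u u.
Proof. by apply: sumr_ge0 => i _; rewrite -expr2 sqr_ge0. Qed.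

Implicit Types p q w : E R n m.

Lemma dotEC p q : dotE p q = dotE q p.
Proof. by rewrite /dotE dotrC [dotr p.2 _]dotrC. Qed.
Lemma dotEDl p q w : dotE (p + q) w = dotE p w + dotE q w.
Proof. rewrite /dotE !dotrDl; lra. Qed.
Lemma dotEZl a p w : dotE (a *: p) w = a * dotE p w.
Proof. rewrite /dotE !dotrZl; lra. Qed.
Lemma dotENl p w : dotE (- p) w = - dotE p w.
Proof. rewrite /dotE !dotrNl; lra. Qed.
Lemma dotEBl p q w : dotE (p - q) w = dotE p w - dotE q w.
Proof. by rewrite dotEDl dotENl. Qed.
Lemma dotEDr p q w : dotE w (p + q) = dotE w p + dotE w q.
Proof. by rewrite dotEC dotEDl !(dotEC w). Qed.
Lemma dotEZr a p w : dotE w (a *: p) = a * dotE w p.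
Proof. by rewrite dotEC dotEZl dotEC. Qed.
Lemma dotENr p w : dotE w (- p) = - dotE w p.
Proof. by rewrite dotEC dotENl dotEC. Qed.
Lemma nsq_ge0 p : 0 <= nsq p.
Proof. by rewrite /nsq /dotE addr_ge0 // dotr_ge0. Qed.
Lemma nrm_ge0 p : 0 <= nrm p.
Proof. exact: sqrtr_ge0. Qed.
Lemma nrm_sq p : nrm p ^+ 2 = nsq p.
Proof. by rewrite /nrm sqr_sqrtr // nsq_ge0. Qed.
Lemma nsqZ a p : nsq (a *: p) = a ^+ 2 * nsq p.
Proof. by rewrite /nsq dotEZl dotEZr mulrA expr2. Qed.
Lemma nsqN p : nsq (- p) = nsq p.
Proof. by rewrite /nsq dotENl dotENr opprK. Qed.
Lemma nrmZ a p : nrm (a *: p) = `|a| * nrm p.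
Proof. by rewrite /nrm nsqZ sqrtrM ?sqr_ge0 // sqrtr_sqr. Qed.
Lemma nsq_expand p q a : nsq (p + a *: q) = nsq p + 2 * a * dotE p q + a ^+ 2 * nsq q.
Proof.
rewrite /nsq !dotEDl !dotEDr !dotEZl !dotEZr (dotEC q p); rewrite -/(nsq p) -/(nsq q). 
rewrite /nsq; lra.
Qed.

Lemma CS_sq p q : dotE p q ^+ 2 <= nsq p * nsq q.
Proof.
have H t : 0 <= nsq q + 2 * t * dotE q p + t ^+ 2 * nsq p.
  by rewrite -nsq_expand nsq_ge0.
have Hp := nsq_ge0 p; have Hq := nsq_ge0 q.
rewrite (dotEC p q).
have [p0|p0] := eqVneq (nsq p) 0.
  have [d0|d0] := eqVneq (dotE q p) 0; first by rewrite d0 p0; lra.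
  have := H (- (nsq q + 1) / (2 * dotE q p)).
  have -> : 2 * (- (nsq q + 1) / (2 * dotE q p)) * dotE q p = - (nsq q + 1).
    by field; rewrite d0.
  rewrite p0 mulr0 addr0; lra.
have := H (- dotE q p / nsq p).
set d := dotE q p; set P := nsq p; set Q := nsq q => HH.
have Ppos : 0 < P by rewrite lt0r p0.
have : 0 <= P * (Q + 2 * (- d / P) * d + (- d / P) ^+ 2 * P) by rewrite mulr_ge0 // ltW.
have -> : P * (Q + 2 * (- d / P) * d + (- d / P) ^+ 2 * P) = P * Q - d ^+ 2 by field.
lra.
Qed.

Lemma CS p q : dotE p q <= nrm p * nrm q.
Proof.
have h1 : `|dotE p q| <= nrm p * nrm q.
  rewrite -[X in X <= _]sqrtr_sqr /nrm -sqrtrM ?nsq_ge0 //.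
  by rewrite ler_sqrt ?mulr_ge0 ?nsq_ge0 // CS_sq.
exact: le_trans (ler_norm _) h1.
Qed.
Lemma nrmN p : nrm (- p) = nrm p.
Proof. by rewrite /nrm nsqN. Qed.
Lemma CS_abs p q : `|dotE p q| <= nrm p * nrm q.
Proof.
have [h|h] := lerP 0 (dotE p q); first by rewrite ger0_norm // CS.
by rewrite ltr0_norm // -dotENl -(nrmN p) CS.
Qed.
End Alg.

Section Desc.
Context {R : realType} {n m : nat}.

Lemma phi_derive (F : E R n m -> R) G (p d : E R n m) (t : R) : is_gradient F G ->
  is_derive t (1:R) (fun s : R => F (p + s *: d)) (dotE (G (p + t *: d)) d).
Proof.
move=> HG; have [dF dFe] := HG (p + t *: d).
have eqf : (fun h : R => h^-1 *: (((fun s => F (p + s *: d)) \o shift t) (h *: 1) - F (p + t *: d)))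
   = (fun h => h^-1 *: ((F \o shift (p + t *: d)) (h *: d) - F (p + t *: d))).
  apply: funext => h /=; congr (_ *: (F _ - _)).
  by rewrite /shift /= [h%:A](mulr1) scalerDl addrCA.
split.
  have := @diff_derivable _ _ _ F _ d dF; rewrite /derivable -eqf; exact.
by rewrite /derive eqf -/(derive F (p + t *: d) d) deriveE // dFe.
Qed.

Lemma descent (F : E R n m -> R) G L (p d : E R n m) :
  is_gradient F G -> lipschitz_field G L -> 0 <= L ->
  F (p + d) <= F p + dotE (G p) d + L / 2 * nsq d.
Proof.
move=> HG HL L0.
set c1 := dotE (G p) d; set c2 := L / 2 * nsq d.
pose phi := (fun s : R => F (p + s *: d)).
pose psi := phi - (c1 \*: id) - (c2 \*: (id * id)).
have dpsi : forall s : R, is_derive s (1:R) psi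
    (dotE (G (p + s *: d)) d - c1 *: (1:R) - c2 *: (s *: (1:R) + s *: (1:R))).
  move=> s; apply: is_deriveB. apply: is_deriveB. exact: phi_derive.
have [c cI Hc] := MVT (ltr01 : (0:R) < 1) (fun x _ => dpsi x)
  (derivable_within_continuous (fun x _ => @ex_derive _ _ _ _ _ _ _ (dpsi x))).
have c0 : 0 <= c by move: cI; rewrite in_itv /= => /andP [/ltW].
have key : dotE (G (p + c *: d)) d - c1 <= L * c * nsq d.
  rewrite /c1 -dotEBl.
  apply: le_trans; first exact: CS.
  apply: (@le_trans _ _ (L * nrm ((p + c *: d) - p) * nrm d)).
    by apply: ler_wpM2r; [exact: nrm_ge0| exact: HL].
  rewrite addrC addKr nrmZ ger0_norm // -nrm_sq; lra.
have E1 : psi 1 = F (p + 1 *: d) - c1 * 1 - c2 * (1 * 1) := erefl.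
have E0 : psi 0 = F (p + 0 *: d) - c1 * 0 - c2 * (0 * 0) := erefl.
have E2 : (c1%:A : R) = c1 * 1 := erefl.
have E3 : (c2 *: (c%:A + c%:A) : R) = c2 * (c * 1 + c * 1) := erefl.
move: Hc; rewrite E1 E0 E2 E3 scale1r scale0r addr0 /c2 => Hc.
have : 0 <= L * c * nsq d - (dotE (G (p + c *: d)) d - c1) by lra.
nra.
Qed.
End Desc.

Section Sc.
Context {R : realType}.

Lemma lam_facts (a r s Cf al lam : R) : 0 <= s -> r = s ^+ 2 -> `|a| <= s * Cf ->
  0 <= al -> 0 <= Cf -> lam = Num.max 0 (- a + al * r) / r ->
  - a - lam * r <= - (al * r) /\ lam * a + lam ^+ 2 * r <= al * (Cf * s + al * r).
Proof.
move=> s0 rE aB al0 Cf0 ->.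
have [r0|rpos] := eqVneq r 0.
  have s00 : s = 0.
    have : s ^+ 2 == 0 by rewrite -rE r0.
    by rewrite expf_eq0 => /andP [_ /eqP].
  move: aB; rewrite s00 mul0r normr_le0 => /eqP ->.
  rewrite r0 invr0 !mulr0; split; lra.
have rp : 0 < r by rewrite lt0r rpos rE sqr_ge0.
have aa : - a <= s * Cf by have := ler_norm (- a); rewrite normrN; lra.
case: (lerP (- a + al * r) 0) => H.
  rewrite !mul0r expr0n /= mul0r addr0; split; first lra.
  by rewrite mulr_ge0 // addr_ge0 ?mulr_ge0 // rE sqr_ge0.
set M := - a + al * r.
have lr : M / r * r = M by rewrite divfK.
split; first by rewrite lr /M; lra.
have -> : M / r * a + (M / r) ^+ 2 * r = M / r * (a + M / r * r) by rewrite expr2; ring.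
rewrite lr /M.
have -> : (- a + al * r) / r * (a + (- a + al * r)) = al * (- a + al * r) by field.
rewrite ler_wpM2l //; lra.
Qed.

Lemma lyap_step (f0 f1 h0 h1 X Y D rr s Cf al ga Lf Lh : R) :
  0 < ga -> 0 < al -> 0 < Lh -> 0 <= Lf -> ga * (Lf + al * Lh) <= 1 ->
  0 <= D -> 0 <= s -> rr = s ^+ 2 -> 0 <= Cf ->
  X + D <= al * (Cf * s + al * rr) -> Y <= - (al * rr) ->
  f1 <= f0 + ga * X + Lf / 2 * (ga ^+ 2 * D) ->
  h1 <= h0 + ga * Y + Lh / 2 * (ga ^+ 2 * D) ->
  f1 + (al + 1 / (2 * Lh * ga)) * h1 <=
  f0 + (al + 1 / (2 * Lh * ga)) * h0 - ga * D / 4 + ga ^+ 2 * al * Cf ^+ 2 * Lh / 2.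
Proof.
move=> g0 a0 L0 Lf0 gL D0 s0 rE Cf0 HX HY Hf Hh.
set b := 1 / (2 * Lh * ga).
have b0 : 0 < b by rewrite /b divr_gt0 // !mulr_gt0.
have bLg : b * Lh * ga = 1 / 2 by rewrite /b; field; rewrite ?gt_eqF.
have young : Cf * s <= b * rr + Cf ^+ 2 * Lh * ga / 2.
  have H1 : 0 <= (s - Cf * Lh * ga) ^+ 2 by rewrite sqr_ge0.
  have H2 : 2 * Lh * ga * (b * rr + Cf ^+ 2 * Lh * ga / 2 - Cf * s) = (s - Cf * Lh * ga) ^+ 2.
    by rewrite /b rE; field; rewrite ?gt_eqF.
  have := H1; rewrite -H2 pmulr_rge0; last by rewrite !mulr_gt0.
  lra.
have F1 : (al + b) * h1 <= (al + b) * (h0 + ga * Y + Lh / 2 * (ga ^+ 2 * D)).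
  by apply: ler_wpM2l => //; apply: ltW; rewrite addr_gt0.
have F2 : (al + b) * (ga * Y) <= (al + b) * (ga * (- (al * rr))).
  apply: ler_wpM2l; first by apply: ltW; rewrite addr_gt0.
  apply: ler_wpM2l => //; exact: ltW.
have F3 : ga * X <= ga * (- D + al * (Cf * s + al * rr)).
  apply: ler_wpM2l; [exact: ltW | lra].
have F4 : ga * al * (Cf * s) <= ga * al * (b * rr + Cf ^+ 2 * Lh * ga / 2).
  by apply: ler_wpM2l => //; apply: ltW; rewrite mulr_gt0.
have F5 : ga * (ga * (Lf + al * Lh)) * D <= ga * D.
  rewrite -mulrA; apply: ler_wpM2l; first exact: ltW.
  by rewrite ler_piMl.
have E1 : b * Lh * ga * (ga * D) = ga * D / 2 by rewrite bLg; field.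
nra.
Qed.
End Sc.

Section Alg2.
Context {R : realType} {n m : nat}.
Implicit Types (Gf Gh : E R n m -> E R n m) (p : E R n m).

Definition dir Gf Gh (rho : E R n m -> R) (al : R) p : E R n m :=
  - Gf p - alg_lambda Gf Gh rho al p *: Gh p.

Lemma step_eq Gf Gh rho al ga p :
  alg_step Gf Gh rho al ga p = p + ga *: dir Gf Gh rho al p.
Proof. by []. Qed.

Lemma lam_eq Gf Gh al p :
  alg_lambda Gf Gh (fun q => nsq (Gh q)) al p =
  Num.max 0 (- dotE (Gh p) (Gf p) + al * nsq (Gh p)) / nsq (Gh p).
Proof.
rewrite /alg_lambda; case: eqP => [->|_].
  have z : nsq (0 : E R n m) = 0.
    by rewrite -(scale0r (0 : E R n m)) nsqZ expr0n /= mul0r.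
  by rewrite z invr0 mulr0.
by rewrite /nsqr /nsq /dotE opprD.
Qed.

Lemma sum_pigeon (v : nat -> R) (K : nat) (S : R) : (0 < K)%N ->
  \sum_(0 <= j < K) v j <= S -> exists t, (t < K)%N /\ v t <= S / K%:R.
Proof.
move=> K0 HS.
case: (pselect (exists t, (t < K)%N /\ v t <= S / K%:R)) => // H; exfalso.
have H' : forall t, (t < K)%N -> S / K%:R < v t.
  move=> t tK; rewrite ltNge; apply/negP => Hle; apply: H; by exists t.
have : \sum_(0 <= j < K) (S / K%:R) < \sum_(0 <= j < K) v j.
  apply: ltr_sum_nat => // t /andP [_ tK]; exact: H'.
rewrite sumr_const_nat subn0 -[_ *+ K]mulr_natr divfK; last by rewrite pnatr_eq0 -lt0n.
lra.
Qed.

Lemma step_facts (f h : E R n m -> R) Gf Gh Lf Lh Cf al ga q :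
  is_gradient f Gf -> lipschitz_field Gf Lf -> 0 <= Lf ->
  is_gradient h Gh -> lipschitz_field Gh Lh -> 0 <= Lh ->
  nrm (Gf q) <= Cf -> 0 <= al ->
  let rho := fun p => nsq (Gh p) in
  let Dl := dir Gf Gh rho al q in
  let q' := alg_step Gf Gh rho al ga q in
  [/\ f q' <= f q + ga * dotE (Gf q) Dl + Lf / 2 * (ga ^+ 2 * nsq Dl),
      h q' <= h q + ga * dotE (Gh q) Dl + Lh / 2 * (ga ^+ 2 * nsq Dl),
      dotE (Gf q) Dl + nsq Dl <= al * (Cf * nrm (Gh q) + al * nsq (Gh q)) &
      dotE (Gh q) Dl <= - (al * nsq (Gh q))].
Proof.
move=> Hf HLf Lf0 Hh HLh Lh0 HCf al0 rho Dl q'.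
have Cf0 : 0 <= Cf := le_trans (nrm_ge0 _) HCf.
rewrite /q' step_eq -/Dl.
split.
- by rewrite -nsqZ -dotEZr; apply: descent.
- by rewrite -nsqZ -dotEZr; apply: descent.
- set lam := alg_lambda Gf Gh rho al q.
  have [_ H2] := @lam_facts R (dotE (Gh q) (Gf q)) (nsq (Gh q)) (nrm (Gh q)) Cf al lam
       (nrm_ge0 (Gh q)) (esym (nrm_sq _))
       (le_trans (CS_abs _ _) (ler_wpM2l (nrm_ge0 _) HCf)) al0 Cf0 (lam_eq _ _ _ _).
  have -> : dotE (Gf q) Dl + nsq Dl = lam * dotE (Gh q) (Gf q) + lam ^+ 2 * nsq (Gh q).
    rewrite /Dl /dir -/lam -opprD nsqN nsq_expand dotENr dotEDr dotEZr.
    rewrite (dotEC (Gf q) (Gh q)) /nsq; ring.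
  exact: H2.
- set lam := alg_lambda Gf Gh rho al q.
  have [H1 _] := @lam_facts R (dotE (Gh q) (Gf q)) (nsq (Gh q)) (nrm (Gh q)) Cf al lam
       (nrm_ge0 (Gh q)) (esym (nrm_sq _))
       (le_trans (CS_abs _ _) (ler_wpM2l (nrm_ge0 _) HCf)) al0 Cf0 (lam_eq _ _ _ _).
  have -> : dotE (Gh q) Dl = - dotE (Gh q) (Gf q) - lam * nsq (Gh q).
    by rewrite /Dl /dir -/lam dotEDr dotENr dotENr dotEZr.
  exact: H1.
Qed.

Definition kap (Lf Lh : R) := Num.min 1 (1 / (Lf + Lh)).
Definition Bc (Lf Cf Lh C0 Delta : R) :=
  Delta + C0 + C0 / (2 * Lh * kap Lf Lh) + Cf ^+ 2 * Lh / 2.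
Definition Mc (Lf Cf Lh cr C0 Delta : R) :=
  cr ^+ 2 * (C0 / kap Lf Lh + 2 * Lh * Bc Lf Cf Lh C0 Delta)
  + 4 * Bc Lf Cf Lh C0 Delta / kap Lf Lh.

Lemma gamma_facts (Lf Lh al : R) : 0 <= Lf -> 0 < Lh -> 0 < al -> al <= 1 ->
  let ga := Num.min al (1 / (Lf + al * Lh)) in
  [/\ 0 < ga, ga <= al, ga * (Lf + al * Lh) <= 1 & kap Lf Lh * al <= ga].
Proof.
move=> Lf0 Lh0 al0 al1 ga.
have p1 : 0 < Lf + al * Lh by rewrite ltr_wpDl // mulr_gt0.
have p2 : 0 < Lf + Lh by rewrite ltr_wpDl.
have u0 : 0 < 1 / (Lf + al * Lh) by rewrite divr_gt0.
have w0 : 0 < 1 / (Lf + Lh) by rewrite divr_gt0.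
have uE : 1 / (Lf + al * Lh) * (Lf + al * Lh) = 1 by rewrite mul1r mulVf ?gt_eqF.
have wE : 1 / (Lf + Lh) * (Lf + Lh) = 1 by rewrite mul1r mulVf ?gt_eqF.
have wu : 1 / (Lf + Lh) <= 1 / (Lf + al * Lh).
  rewrite ler_pdivrMr // mul1r ler_pdivlMl //; nra.
have k0 : 0 < kap Lf Lh by rewrite /kap lt_min ltr01 w0.
have k1 : kap Lf Lh <= 1 by rewrite /kap ge_min lexx.
have kw : kap Lf Lh <= 1 / (Lf + Lh) by rewrite /kap ge_min lexx orbT.
split.
- by rewrite /ga lt_min al0 u0.
- by rewrite /ga ge_min lexx.
- have : ga <= 1 / (Lf + al * Lh) by rewrite /ga ge_min lexx orbT.
  move=> H; have := ler_wpM2r (ltW p1) H; rewrite uE //.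
- rewrite /ga le_min; apply/andP; split; first by nra.
  apply: le_trans wu; apply: le_trans kw; nra.
Qed.

Lemma core (f h : E R n m -> R) Gf Gh (fbar Lf Cf Lh cr C0 Delta al : R)
  (K : nat) (p0 : E R n m) :
  is_gradient f Gf -> lipschitz_field Gf Lf -> 0 <= Lf ->
  (forall p, fbar <= f p) -> (forall p, nrm (Gf p) <= Cf) ->
  is_gradient h Gh -> lipschitz_field Gh Lh -> 0 < Lh -> (forall p, 0 <= h p) ->
  (forall p, h p <= cr ^+ 2 * nsq (Gh p)) ->
  0 < C0 -> 0 <= Delta -> 0 < al -> al <= 1 -> (0 < K)%N -> al ^+ 3 * K%:R = 1 ->
  let rho := fun p => nsq (Gh p) in
  let ga := Num.min al (1 / (Lf + al * Lh)) in
  h p0 <= al ^+ 2 * C0 -> f p0 - fbar <= Delta ->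
  exists t, (t < K)%N /\
    let pt := alg_iter Gf Gh rho al ga p0 t in
    let lt := alg_lambda Gf Gh rho al pt in
    Num.max (h pt) (nsq (Gf pt + lt *: Gh pt)) <= Mc Lf Cf Lh cr C0 Delta * al ^+ 2.
Proof.
move=> Hf HLf Lf0 Hfb HCf Hh HLh Lh0 h0 Hreg C00 D00 al0 al1 K0 alK rho ga Hp0 Hf0.
have [g0 gal gL kg] := gamma_facts Lf Lh al Lf0 Lh0 al0 al1.
rewrite -/ga in g0 gal gL kg.
have Cf0 : 0 <= Cf := le_trans (nrm_ge0 _) (HCf 0).
set kp := kap Lf Lh.
have k0 : 0 < kp by rewrite /kp /kap lt_min ltr01 divr_gt0 // ltr_wpDl.
have k1 : kp <= 1 by rewrite /kp /kap ge_min lexx.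
pose pk k := alg_iter Gf Gh rho al ga p0 k.
have pkS k : pk k.+1 = alg_step Gf Gh rho al ga (pk k) by rewrite /pk /alg_iter iterS.
pose Dk k := nsq (dir Gf Gh rho al (pk k)).
pose rk k := nsq (Gh (pk k)).
set b := 1 / (2 * Lh * ga).
have b0 : 0 < b by rewrite /b divr_gt0 // !mulr_gt0.
set c := al + b.
have c0 : 0 < c by rewrite /c addr_gt0.
have S k : f (pk k.+1) + c * h (pk k.+1) <=
    f (pk k) + c * h (pk k) - ga * Dk k / 4 + ga ^+ 2 * al * Cf ^+ 2 * Lh / 2
  /\ h (pk k.+1) <= h (pk k) - ga * al * rk k + Lh / 2 * (ga ^+ 2 * Dk k).
  have [A1 A2 A3 A4] := step_facts _ _ _ _ _ _ _ _ ga _ Hf HLf Lf0 Hh HLh (ltW Lh0) (HCf (pk k)) (ltW al0).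
  rewrite pkS; split.
    exact: (lyap_step _ _ _ _ _ _ _ _ _ _ _ _ _ _ g0 al0 Lh0 Lf0 gL (nsq_ge0 _) (nrm_ge0 _) (esym (nrm_sq _)) Cf0 A3 A4 A1 A2).
  have := ler_wpM2l (ltW g0) A4; rewrite /rk /Dk; move: A2; rewrite -/rho; nra.
have I1 k : f (pk k) + c * h (pk k) + ga / 4 * \sum_(0 <= j < k) Dk j <=
    f p0 + c * h p0 + k%:R * (ga ^+ 2 * al * Cf ^+ 2 * Lh / 2).
  elim: k => [|k IH]; first by rewrite big_geq // mulr0 mul0r !addr0.
  have -> : \sum_(0 <= j < k.+1) Dk j = \sum_(0 <= j < k) Dk j + Dk k by rewrite big_nat_recr.
  rewrite -[k.+1%:R]natr1; have [S1 _] := S k; lra.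
have I2 k : h (pk k) + ga * al * \sum_(0 <= j < k) rk j <=
    h p0 + Lh / 2 * ga ^+ 2 * \sum_(0 <= j < k) Dk j.
  elim: k => [|k IH]; first by rewrite !big_geq // !mulr0 !addr0.
  have -> : \sum_(0 <= j < k.+1) Dk j = \sum_(0 <= j < k) Dk j + Dk k by rewrite big_nat_recr.
  have -> : \sum_(0 <= j < k.+1) rk j = \sum_(0 <= j < k) rk j + rk k by rewrite big_nat_recr.
  have [_ S2] := S k; lra.
set SD := \sum_(0 <= j < K) Dk j.
set Sr := \sum_(0 <= j < K) rk j.
have SD0 : 0 <= SD by apply: sumr_ge0 => j _; exact: nsq_ge0.
have Sr0 : 0 <= Sr by apply: sumr_ge0 => j _; exact: nsq_ge0.
set B := Bc Lf Cf Lh C0 Delta.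
have ch0 : c * h (pk 0) <= c * (al ^+ 2 * C0) by rewrite ler_wpM2l // ltW.
have kal2 : kp * al ^+ 2 <= ga.
  apply: le_trans kg; rewrite expr2 mulrA ler_piMr //; nra.
have bt : b * (al ^+ 2 * C0) <= C0 / (2 * Lh * kp).
  rewrite ler_pdivlMr ?mulr_gt0 //.
  have -> : b * (al ^+ 2 * C0) * (2 * Lh * kp) = (kp * al ^+ 2) * C0 / ga.
    by rewrite /b; field; rewrite !gt_eqF.
  rewrite ler_pdivrMr //; nra.
have al3 : al ^+ 3 <= 1 by rewrite exprn_ile1 // ltW.
have gK : K%:R * (ga ^+ 2 * al) <= 1.
  have g2 : ga ^+ 2 <= al ^+ 2 by nra.
  have g3 : ga ^+ 2 * al <= al ^+ 3 by rewrite [al ^+ 3]exprS mulrC; nra.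
  have := ler_wpM2r (ler0n _ K) g3; rewrite alK mulrC; exact.
have HSD : ga * SD <= 4 * B.
  have H3 := I1 K; have H2 := Hfb (pk K); have H1 := h0 (pk K).
  rewrite -/SD in H3.
  have H4 : 0 <= c * h (pk K) by rewrite mulr_ge0 // ltW.
  have H5 : K%:R * (ga ^+ 2 * al * Cf ^+ 2 * Lh / 2) <= Cf ^+ 2 * Lh / 2.
    have -> : ga ^+ 2 * al * Cf ^+ 2 * Lh / 2 = (ga ^+ 2 * al) * (Cf ^+ 2 * Lh / 2) by ring.
    rewrite mulrA; apply: ler_piMl => //; by rewrite !mulr_ge0 // ltW.
  have H6 : al * (al ^+ 2 * C0) <= C0.
    have -> : al * (al ^+ 2 * C0) = al ^+ 3 * C0 by rewrite mulrA -exprS.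
    by rewrite ler_piMl // ltW.
  have H7 : c * (al ^+ 2 * C0) = al * (al ^+ 2 * C0) + b * (al ^+ 2 * C0) by rewrite /c mulrDl.
  have ch1 : c * h p0 <= c * (al ^+ 2 * C0) := ch0.
  rewrite /B /Bc -/kp. lra.
have HSr : ga * al * Sr <= al ^+ 2 * C0 + 2 * Lh * ga * B.
  have H2 := I2 K; have H1 := h0 (pk K); rewrite -/Sr -/SD in H2.
  have H2' : h (pk K) + ga * al * Sr <= h p0 + Lh / 2 * ga ^+ 2 * SD := H2.
  have H3 : Lh / 2 * ga ^+ 2 * SD = Lh / 2 * ga * (ga * SD) by rewrite expr2; ring.
  have H4 : Lh / 2 * ga * (ga * SD) <= Lh / 2 * ga * (4 * B).
    by apply: ler_wpM2l; [rewrite !mulr_ge0 // ltW | exact: HSD].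
  have H5 : Lh / 2 * ga * (4 * B) = 2 * Lh * ga * B by field.
  lra.
have Hfin : al * (cr ^+ 2 * Sr + SD) <= Mc Lf Cf Lh cr C0 Delta.
  rewrite /Mc -/kp -/B.
  have A1 : al * SD <= 4 * B / kp.
    rewrite ler_pdivlMr //; have := ler_wpM2r SD0 kg.
    have -> : al * SD * kp = kp * al * SD by ring.
    rewrite /kp; lra.
  have A2 : al * Sr <= C0 / kp + 2 * Lh * B.
    rewrite -(ler_pM2l g0) mulrDr mulrA.
    have : al ^+ 2 * C0 <= ga * (C0 / kp).
      by rewrite mulrA ler_pdivlMr //; nra.
    nra.
  have cr0 : 0 <= cr ^+ 2 by rewrite sqr_ge0.
  have := ler_wpM2l cr0 A2; nra.
have Hsum : \sum_(0 <= j < K) (cr ^+ 2 * rk j + Dk j) <= Mc Lf Cf Lh cr C0 Delta / al.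
  rewrite big_split /= -mulr_sumr -/Sr -/SD ler_pdivlMr // mulrC; exact: Hfin.
have [t [tK Ht]] := sum_pigeon _ _ _ K0 Hsum.
exists t; split => //.
move=> pt lt.
have HE : Mc Lf Cf Lh cr C0 Delta / al / K%:R = Mc Lf Cf Lh cr C0 Delta * al ^+ 2.
  have KE : K%:R = (al ^+ 3)^-1.
    have -> : K%:R = (al ^+ 3)^-1 * (al ^+ 3 * K%:R) :> R.
      by rewrite mulKf // expf_neq0 // gt_eqF.
    by rewrite alK mulr1.
  by rewrite KE; field; rewrite gt_eqF.
rewrite HE in Ht.
have Ht' : cr ^+ 2 * nsq (Gh pt) + nsq (dir Gf Gh rho al pt) <=
   Mc Lf Cf Lh cr C0 Delta * al ^+ 2 := Ht.
have Dt : nsq (Gf pt + lt *: Gh pt) = nsq (dir Gf Gh rho al pt) by rewrite /dir -opprD nsqN.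
have rt := Hreg pt.
have Dt0 := nsq_ge0 (dir Gf Gh rho al pt).
have rt0 : 0 <= cr ^+ 2 * nsq (Gh pt) by rewrite mulr_ge0 ?sqr_ge0 ?nsq_ge0.
rewrite ge_max Dt; apply/andP; split; lra.
Qed.
End Alg2.

Section Pow.
Context {R : realType}.
Lemma Mc_gt0 (Lf Cf Lh cr C0 Delta : R) : 0 <= Lf -> 0 < Lh -> 0 < C0 -> 0 <= Delta ->
  0 < Mc Lf Cf Lh cr C0 Delta.
Proof.
move=> Lf0 Lh0 C00 D00.
have k0 : 0 < kap Lf Lh by rewrite /kap lt_min ltr01 divr_gt0 // ltr_wpDl.
have B0 : 0 < Bc Lf Cf Lh C0 Delta.
  rewrite /Bc; have : 0 < C0 / (2 * Lh * kap Lf Lh) by rewrite divr_gt0 // !mulr_gt0.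
  have : 0 <= Cf ^+ 2 * Lh / 2 by rewrite divr_ge0 // mulr_ge0 ?sqr_ge0 // ltW.
  lra.
rewrite /Mc; apply: ltr_wpDl.
  apply: mulr_ge0; first exact: sqr_ge0. apply: addr_ge0; first by rewrite divr_ge0 // ltW. by apply/ltW; rewrite !mulr_gt0.
by rewrite divr_gt0 // mulr_gt0.
Qed.

Lemma pow_facts (K : nat) (M eps : R) : (0 < K)%N -> 0 < M -> 0 < eps ->
  M `^ (3 / 2) * eps `^ (- (3 / 2)) <= K%:R ->
  let al := K%:R `^ (- (1 / 3)) in
  [/\ 0 < al, al <= 1, al ^+ 3 * K%:R = 1 & M * al ^+ 2 <= eps].
Proof.
move=> K0 M0 e0 HK al.
have Kp : (0 : R) < K%:R by rewrite ltr0n.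
have al0 : 0 < al by rewrite powR_gt0.
have al3 : al ^+ 3 = K%:R^-1.
  rewrite /al -powR_mulrn ?powR_ge0 // -powRrM.
  have -> : - (1 / 3) * 3%:R = (1 *- 1 : R) by rewrite mulr1n; field.
  by rewrite powR_invn ?expr1 // ltW.
have alK : al ^+ 3 * K%:R = 1 by rewrite al3 mulVf // gt_eqF.
have K1 : (1 : R) <= K%:R by rewrite ler1n.
have al1 : al <= 1.
  rewrite leNgt; apply/negP => H.
  have : 1 < al ^+ 3 by rewrite exprn_egt1.
  rewrite al3 invf_gt1 //; lra.
split => //.
set y := M `^ (3 / 2) * eps `^ (- (3 / 2)).
have y0 : 0 <= y by rewrite mulr_ge0 ?powR_ge0.
have Ey : y ^+ 2 = M ^+ 3 / eps ^+ 3.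
  rewrite /y exprMn -(powR_mulrn 2 (powR_ge0 M _)) -(powR_mulrn 2 (powR_ge0 eps _)) -!powRrM.
  have -> : 3 / 2 * 2%:R = (3%:R : R) by field.
  have -> : - (3 / 2) * 2%:R = (1 *- 3 : R) by rewrite /= -mulNrn; field.
  by rewrite powR_mulrn ?ltW // powR_invn ?ltW.
have K2 : y ^+ 2 <= K%:R ^+ 2 by rewrite ler_pXn2r // nnegrE // ltW.
set s := eps / M.
have s0 : 0 < s by rewrite divr_gt0.
have H6 : (al ^+ 2) ^+ 3 <= s ^+ 3.
  have -> : (al ^+ 2) ^+ 3 = (K%:R ^+ 2)^-1 by rewrite -exprM mulnC exprM al3 exprVn.
  have -> : s ^+ 3 = (y ^+ 2)^-1 by rewrite Ey /s; field; rewrite ?gt_eqF.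
  rewrite lef_pV2 // posrE ?exprn_gt0 //.
  by rewrite /y mulr_gt0 // powR_gt0.
have H7 : al ^+ 2 <= s by move: H6; rewrite ler_pXn2r // nnegrE ?sqr_ge0 // ltW.
rewrite /s ler_pdivlMr // in H7; lra.
Qed.
End Pow.

Theorem mainTheorem4 (R : realType) (n m : nat)
  (f g : E R n m -> R) (Gf Gg Gh : E R n m -> E R n m)
  (fbar Lf Cf Lh cr C0 Delta : R) :
  (* standing setting on f *)
  is_gradient f Gf -> continuous Gf ->
  (forall p, fbar <= f p) -> (forall e, 0 < e -> exists p, f p < fbar + e) ->
  0 <= Lf -> lipschitz_field Gf Lf ->
  (forall p, nrm (Gf p) <= Cf) ->
  (* standing setting on g and h := ||grad_y g||^2 *)
  is_gradient g Gg -> C1_field Gg ->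
  let h := fun p => nsqr (Gg p).2 in
  is_gradient h Gh -> continuous Gh ->
  0 < Lh -> lipschitz_field Gh Lh ->
  (* regularity condition *)
  0 < cr -> (forall p, Num.sqrt (nsqr (Gg p).2) <= cr * nrm (Gh p)) ->
  0 < C0 -> 0 <= Delta ->
  let rho := fun p => nsq (Gh p) in
  exists C : R, 0 < C /\
  forall eps : R, 0 < eps ->
  exists K : nat, (1 <= K)%N /\ K%:R <= C * eps `^ (- (3 / 2)) + 1 /\
  let alpha := K%:R `^ (- (1 / 3)) in
  let gamma := Num.min alpha (1 / (Lf + alpha * Lh)) in
  forall p0 : E R n m, h p0 <= alpha ^+ 2 * C0 -> f p0 - fbar <= Delta ->
  exists t : nat, (t < K)%N /\
    let pt := alg_iter Gf Gh rho alpha gamma p0 t in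
    let lt := alg_lambda Gf Gh rho alpha pt in
    Num.max (nsqr (Gg pt).2)
            (nsq (Gf pt + lt *: Gh pt)) <= eps.
Proof.
move=> Hf cGf Hfb Hinf Lf0 HLf HCf Hg C1g h Hh cGh Lh0 HLh cr0 Hreg C00 D00 rho.
set M := Mc Lf Cf Lh cr C0 Delta.
have M0 : 0 < M by apply: Mc_gt0.
exists (M `^ (3 / 2)); split; first exact: powR_gt0.
move=> eps e0.
set y := M `^ (3 / 2) * eps `^ (- (3 / 2)).
have y0 : 0 <= y by rewrite mulr_ge0 ?powR_ge0.
have /andP [Hy1 Hy2] := truncn_itv y0.
exists (Num.trunc y).+1; split => //; split.
  by rewrite -natr1; lra.
move=> alpha gamma p0 Hp0 Hf0.
have [al0 al1 alK Meps] := @pow_facts R _ M eps (ltn0Sn _) M0 e0 (ltW Hy2).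
have hge0 : forall p, 0 <= h p by move=> p; exact: dotr_ge0.
have hreg : forall p, h p <= cr ^+ 2 * nsq (Gh p).
  move=> p; have := Hreg p; have := sqrtr_ge0 (h p).
  rewrite -nrm_sq; have := nrm_ge0 (Gh p).
  have : Num.sqrt (h p) ^+ 2 = h p by rewrite sqr_sqrtr.
  rewrite /h; nra.
have [t [tK Ht]] := @core R n m f h Gf Gh fbar Lf Cf Lh cr C0 Delta alpha _ p0 Hf HLf Lf0 Hfb HCf Hh HLh Lh0 hge0 hreg C00 D00 al0 al1
  (ltn0Sn _) alK Hp0 Hf0.
exists t; split => //.
exact: (le_trans Ht Meps).
Qed.
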